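(* In the odd setting below, the determinant $D_k=\det N_k=\det(F^{(k)}_0,F^{(k)}_1,\dots,F^{(k)}_{2s})$ is invariant under the scaling, i.e. it is homogeneous of degree $0$.
   Context: Odd setting: integers $n\ge1$, $s\ge1$, $m=2s+1$; $a_k^0,\dots,a_k^{2s}$ are $n\times n$ matrices with indeterminate entries, $N$-periodic in $k$. $Q_k$ is the $mn\times mn$ block matrix with $I_n$ in blocks $(i+1,i)$, last block column $(a_k^0;\dots;a_k^{2s})$, $O_n$ elsewhere. $r_k=(a_k^0;O_n;a_k^2;O_n;\dots;O_n;a_k^{2s})$. $F^{(k)}_0=r_k$, $F^{(k)}_\ell=Q_k\cdots Q_{k+\ell-1}r_{k+\ell}$, $N_k=(F^{(k)}_0,\dots,F^{(k)}_{2s})$. The scaling, for $\mu>0$: $a_j^{2r+1}\mapsto\mu^{-1+r/s}a_j^{2r+1}$ ($r=0,\dots,s-1$) and $a_j^{2r}\mapsto\mu^{r/s}a_j^{2r}$ ($r=0,\dots,s$), for all $j$. A function of the entries is homogeneous of degree $d\in\mathbb Q$ if the scaling multiplies it by $\mu^d$ for all $\mu>0$. *)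

(* Defs.v *)
From HB Require Import structures.
From mathcomp Require Import all_boot all_order all_algebra.
Set Implicit Arguments. Unset Strict Implicit. Unset Printing Implicit Defensive.
Import Order.TTheory GRing.Theory Num.Theory.
Local Open Scope ring_scope.

(* Setting: m = 2s+1 block indices 0..2s, matrices a k l = a_k^l (n x n),
   k an integer. Block matrices of size mn x mn are represented with
   mathcomp's block-matrix type of size \sum_(i < m) n. *)

Section Odd.
Variables (R : comUnitRingType) (n s : nat).
Notation m := (s.*2.+1).
Notation S := (\sum_(i < m) n)%N.
Variable a : int -> 'I_m -> 'M[R]_n.

Definition Qmat (k : int) : 'M[R]_(S, S) :=
  \mxblock_(i < m, j < m)
    (if j == ord_max then a k i
     else if val i == (val j).+1 then 1%:M else 0 : 'M[R]_n).

Definition rvec (k : int) : 'M[R]_(S, n) :=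
  \mxcol_(i < m) (if odd i then 0 else a k i).

Fixpoint Qprod (k : int) (l : nat) : 'M[R]_(S, S) :=
  match l with
  | O => 1%:M
  | l'.+1 => Qprod k l' *m Qmat (k + l'%:Z)
  end.

Definition Fvec (k : int) (l : nat) : 'M[R]_(S, n) :=
  Qprod k l *m rvec (k + l%:Z).

Definition Nmat (k : int) : 'M[R]_(S, S) :=
  \mxrow_(l < m) Fvec k l.

Definition Dk (k : int) : R := \det (Nmat k).
End Odd.

(* The scaling with parameter mu > 0, written via lambda = mu^(1/s) > 0
   (so mu^(r/s) = lambda^r):
   a_j^{2r+1} |-> mu^{-1} lambda^r a_j^{2r+1},  a_j^{2r} |-> lambda^r a_j^{2r}. *)
Definition scaled (R : numFieldType) (n s : nat)
  (a : int -> 'I_(s.*2.+1) -> 'M[R]_n) (mu lambda : R) :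
  int -> 'I_(s.*2.+1) -> 'M[R]_n :=
  fun k l => (if odd l then mu^-1 * lambda ^+ (l./2) else lambda ^+ (l./2)) *: a k l.

(* Main.v *)
Require Import Defs.
From HB Require Import structures.
From mathcomp Require Import all_boot all_order all_algebra.
From mathcomp Require Import ring.
Set Implicit Arguments. Unset Strict Implicit. Unset Printing Implicit Defensive.
Import Order.TTheory GRing.Theory Num.Theory.
Local Open Scope ring_scope.

Section Gen.
Variables (R : comUnitRingType) (n s : nat).
Notation m := (s.*2.+1).
Notation S := (\sum_(i < m) n)%N.
Implicit Types a : int -> 'I_m -> 'M[R]_n.

Definition Qt (a : int -> 'I_m -> 'M[R]_n) (k : int) : 'M[R]_(S, S) :=
  \mxblock_(i < m, j < m)
    (if j == ord_max then (if odd i then a k i else 0)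
     else if val i == (val j).+1 then 1%:M else 0 : 'M[R]_n).

Definition Emx : 'M[R]_(n, S) :=
  \mxrow_(j < m) (if j == ord_max then 1%:M else 0 : 'M[R]_n).

Lemma Qmat_split a k : Qmat a k = Qt a k + rvec a k *m Emx.
Proof.
rewrite /rvec /Emx mul_mxcol_mxrow /Qt /Qmat -mxblockD; apply: eq_mxblock => i j.
case: eqP => Hj; case: (odd i); rewrite ?mulmx1 ?mulmx0 ?mul0mx ?addr0 ?add0r //.
Qed.

Fixpoint Gv (a : int -> 'I_m -> 'M[R]_n) (k : int) (l : nat) : 'M[R]_(S, n) :=
  match l with
  | O => rvec a k
  | l'.+1 => Qt a k *m Gv a (k + 1) l'
  end.

Lemma Qprod_recl a k l : Qprod a k l.+1 = Qmat a k *m Qprod a (k + 1) l.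
Proof.
elim: l => [|l IH] /=; first by rewrite mul1mx mulmx1 addr0.
rewrite /= in IH; rewrite IH -mulmxA; congr (_ *m (_ *m Qmat a _)).
by rewrite intS addrA.
Qed.

Lemma Fvec_recl a k l : Fvec a k l.+1 = Qmat a k *m Fvec a (k + 1) l.
Proof.
by rewrite /Fvec Qprod_recl mulmxA intS addrA.
Qed.

Fixpoint cf (a : int -> 'I_m -> 'M[R]_n) (k : int) (l l' : nat) : 'M[R]_n :=
  match l, l' with
  | O, O => 1%:M
  | O, _.+1 => 0
  | l1.+1, O => Emx *m Fvec a (k + 1) l1
  | l1.+1, l1'.+1 => cf a (k + 1) l1 l1'
  end.

Lemma cf_diag a k l : cf a k l l = 1%:M.
Proof. by elim: l k => [|l IH] k //=. Qed.

Lemma cf_up a k l l' : (l < l')%N -> cf a k l l' = 0.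
Proof.
elim: l k l' => [|l IH] k [|l'] //= H; exact: IH.
Qed.

Lemma F_G a M k l : (l < M)%N ->
  Fvec a k l = \sum_(l' < M) Gv a k l' *m cf a k l l'.
Proof.
elim: l k M => [|l IH] k [|M] // H.
  rewrite (big_ord_recl M) [X in _ + X]big1 ?addr0; last by move=> i _; rewrite /= mulmx0.
  by rewrite mulmx1 /Fvec /= mul1mx addr0.
rewrite (big_ord_recl M) /=.
under [X in _ + X]eq_bigr do rewrite add0n -mulmxA.
rewrite -mulmx_sumr -IH // Fvec_recl Qmat_split mulmxDl -mulmxA addrC.
by [].
Qed.

Definition Gmat a k : 'M[R]_(S, S) := \mxrow_(l < m) Gv a k l.
Definition Umat a k : 'M[R]_(S, S) := \mxblock_(l' < m, l < m) cf a k l l'.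

Lemma Nmat_GU a k : Nmat a k = Gmat a k *m Umat a k.
Proof.
rewrite /Gmat /Umat mul_mxrow_mxblock /Nmat; apply: eq_mxrow => j.
exact: F_G.
Qed.

Lemma det_U a k : \det (Umat a k) = 1.
Proof.
rewrite -det_tr /Umat tr_mxblock det_trig; last first.
  apply/is_trig_mxblockP; split=> [i j lt|i]; first by rewrite cf_up // trmx0.
  by rewrite cf_diag trmx1 scalar_mx_is_trig.
apply: big1 => p _; rewrite /mxblock mxE cf_diag trmx1 mxE eqxx //.
Qed.

Lemma Dk_G a k : Dk a k = \det (Gmat a k).
Proof. by rewrite /Dk Nmat_GU det_mulmx det_U mulr1. Qed.

End Gen.

Lemma scale_mxblock (R : pzRingType) p q (p_ : 'I_p -> nat) (q_ : 'I_q -> nat)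
  (c : R) (B_ : forall i j, 'M[R]_(p_ i, q_ j)) :
  c *: \mxblock_(i, j) B_ i j = \mxblock_(i, j) (c *: B_ i j).
Proof. by apply/matrixP => i j; rewrite /mxblock !mxE. Qed.

Theorem mainTheorem7 (R : rcfType) (n s N : nat) :
  (0 < n)%N -> (0 < s)%N -> (0 < N)%N ->
  forall a : int -> 'I_(s.*2.+1) -> 'M[R]_n,
  (forall k, a (k + N%:Z) = a k) ->
  forall (mu : R), 0 < mu ->
  forall (lambda : R), 0 < lambda -> lambda ^+ s = mu ->
  forall k : int,
    Dk (scaled a mu lambda) k = Dk a k.
Proof.
move=> _ _ _ a _ mu mu0 lambda lam0 Hmu k.
set nu := Num.sqrt lambda.
have nu0 : 0 < nu by rewrite sqrtr_gt0.
have nuE : nu ^+ 2 = lambda by rewrite sqr_sqrtr // ltW.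
have nun0 : nu != 0 by rewrite gt_eqF.
have mun0 : mu != 0 by rewrite gt_eqF.
pose X := \mxdiag_(i < s.*2.+1) ((nu ^+ i)%:M : 'M[R]_n).
pose Y := \mxdiag_(i < s.*2.+1) ((nu ^- i)%:M : 'M[R]_n).
set a' := scaled a mu lambda.
have powE (i : nat) : nu ^+ i = (if odd i then nu else 1) * lambda ^+ i./2.
  rewrite -{1}(odd_double_half i) exprD -muln2 mulnC exprM nuE.
  by case: (odd i); rewrite ?expr1 ?expr0.
have QtE k' : Qt a' k' *m X = nu^-1 *: (X *m Qt a k').
  rewrite /Qt mul_mxblock_mxdiag mul_mxdiag_mxblock scale_mxblock.
  apply: eq_mxblock => i j; case: eqP => Hj.
    case Hi: (odd i); rewrite ?mul0mx ?mulmx0 ?scaler0 //.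
    rewrite /a' /scaled Hi mul_mx_scalar mul_scalar_mx !scalerA; congr (_ *: _).
    rewrite Hj /= powE (powE i) Hi /= odd_double doubleK -Hmu.
    by field; rewrite nun0 expf_neq0 // -nuE expf_neq0.
  case: eqP => Hij; rewrite ?mul0mx ?mulmx0 ?scaler0 //.
  rewrite mul1mx mulmx1 scale_scalar_mx Hij exprS mulrA mulVf //.
  by rewrite mul1r.
have rE k' : rvec a' k' = X *m rvec a k'.
  rewrite /rvec mul_mxdiag_mxcol; apply: eq_mxcol => i.
  case Hi: (odd i); rewrite ?mulmx0 // mul_scalar_mx /a' /scaled Hi powE Hi.
  by rewrite mul1r.
have GE l k' : Gv a' k' l = nu ^- l *: (X *m Gv a k' l).
  elim: l k' => [|l IH] k' /=; first by rewrite expr0 invr1 scale1r rE.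
  rewrite IH -scalemxAr mulmxA QtE -scalemxAl scalerA -mulmxA exprSr invfM.
  by rewrite mulrC.
have GmE : Gmat a' k = X *m Gmat a k *m Y.
  rewrite /Gmat mul_mxrow mul_mxrow_mxdiag; apply: eq_mxrow => l.
  by rewrite GE mul_mx_scalar.
have XY : X *m Y = 1%:M.
  rewrite /X /Y -(mxdiagZ (p_ := fun _ : 'I_(s.*2.+1) => n)) {2 3}/mxdiag.
  rewrite mul_mxdiag_mxblock; apply: eq_mxblock => i j.
  case: eqP => [Hij|_]; rewrite ?mulmx0 //; subst j.
  rewrite !conform_mx_id mul_scalar_mx scale_scalar_mx mulfV // expf_neq0 //.
by rewrite !Dk_G GmE !det_mulmx mulrAC -det_mulmx XY det1 mul1r.
Qed.
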